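(* Let $V$ be a finite nonempty set, $c\in\mathbb{R}^{P_V}$, $\hat x$ a maximally specific partial function on $P_V$, $U\subseteq V$, $\hat x'=\hat x|_{P_U}$, $c'=c|_{P_U}$, $ij\in P_U\setminus\operatorname{dom}(\hat x)$, $b\in\{0,1\}$ and $y\in\operatorname{argmax}\{\varphi_{c'}(x')\mid x'\in X_U[\hat x'],\ x'_{ij}=b\}$. Let $\tau\in\{\tau^y_{\mathrm{out}},\tau^y_{\mathrm{in}},\tau^y_{\mathrm{bd}}\}$ with corresponding sets $P''_{01},P''_{10}$ given in the context. Then for every $x\in X_V[\hat x]$: $$\sum_{pq\in\delta(U)}c_{pq}\big(x_{pq}-\tau(x)_{pq}\big)\le\sum_{pq\in P''_{01}}c^-_{pq}+\sum_{pq\in P''_{10}}c^+_{pq}.$$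
   Context: For a finite set $W$, $P_W=\{pq\in W^2\mid p\neq q\}$, $X_W$ is the set of $x\in\{0,1\}^{P_W}$ with $x_{pq}+x_{qr}-x_{pr}\le1$ for all pairwise distinct $p,q,r\in W$, and $\varphi_c(x)=\sum_{pq\in P_W}c_{pq}x_{pq}$. A partial function $\tilde x$ on $P_W$ is a map from $\operatorname{dom}(\tilde x)\subseteq P_W$ to $\{0,1\}$, $\tilde x^{-1}(b)$ the pairs mapped to $b$, $X_W[\tilde x]=\{x\in X_W\mid x_{pq}=\tilde x_{pq}\ \forall pq\in\operatorname{dom}(\tilde x)\}$; convention $x_{aa}=1$, $y_{aa}=1$ for all $a$. A pair is decided if it has the same value in all completions; $\tilde x$ is maximally specific if $X_W[\tilde x]\ne\emptyset$ and the decided pairs are exactly $\operatorname{dom}(\tilde x)$. Restrictions to $P_U$ are the obvious ones. $\delta(U)=(U\times(V\setminus U))\cup((V\setminus U)\times U)$. For $x\in X_V[\hat x]$: $\tau^y_{\mathrm{out}}(x)_{pq}$ equals $y_{pq}$ on $P_U$; $0$ on $U\times(V\setminus U)$; on $(V\setminus U)\times U$, $1$ if $\exists r\in U: x_{pr}=1\wedge y_{rq}=1$ and $0$ otherwise; $x_{pq}$ on $P_{V\setminus U}$. $\tau^y_{\mathrm{in}}(x)_{pq}$ equals $y_{pq}$ on $P_U$; $0$ on $(V\setminus U)\times U$; on $U\times(V\setminus U)$, $1$ if $\exists r\in U: y_{pr}=1\wedge x_{rq}=1$ and $0$ otherwise; $x_{pq}$ on $P_{V\setminus U}$. $\tau^y_{\mathrm{bd}}(x)_{pq}$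 equals $y_{pq}$ on $P_U$; $0$ on $\delta(U)$; $x_{pq}$ on $P_{V\setminus U}$. Sets: for $\tau^y_{\mathrm{out}}$: $P''_{01}=((V\setminus U)\times U)\setminus\hat x^{-1}(1)$, $P''_{10}=(U\times(V\setminus U))\setminus\hat x^{-1}(0)$; for $\tau^y_{\mathrm{in}}$: $P''_{01}=(U\times(V\setminus U))\setminus\hat x^{-1}(1)$, $P''_{10}=((V\setminus U)\times U)\setminus\hat x^{-1}(0)$; for $\tau^y_{\mathrm{bd}}$: $P''_{01}=\emptyset$, $P''_{10}=\delta(U)\setminus\hat x^{-1}(0)$. For real $a$: $a^+=\max(a,0)$, $a^-=\max(-a,0)$. *)

(* Defs.v *)
From HB Require Import structures.
From mathcomp Require Import all_boot all_order all_algebra.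
From mathcomp Require Import reals.
Set Implicit Arguments. Unset Strict Implicit. Unset Printing Implicit Defensive.
Import Order.TTheory GRing.Theory Num.Theory.
Local Open Scope ring_scope.

Section Defs.
Variable V : finType.

Definition Pairs (W : {set V}) : {set V * V} :=
  [set pq | [&& pq.1 \in W, pq.2 \in W & pq.1 != pq.2]].

(* x in {0,1}^{P_W}: encoded as a boolean function on V*V vanishing outside P_W *)
Definition inX (W : {set V}) (x : V * V -> bool) : Prop :=
  (forall pq, pq \notin Pairs W -> x pq = false) /\
  (forall p q r, p \in W -> q \in W -> r \in W ->
     p != q -> q != r -> p != r ->
     ((x (p, q))%:R + (x (q, r))%:R - (x (p, r))%:R <= 1 :> int)).

(* a partial function on P_W: None = undefined; dom contained in P_W *)
Definition partial_fun (W : {set V}) (xt : V * V -> option bool) : Prop :=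
  forall pq, xt pq <> None -> pq \in Pairs W.

Definition dom (xt : V * V -> option bool) : {set V * V} :=
  [set pq | xt pq != None].

Definition inXp (W : {set V}) (xt : V * V -> option bool) (x : V * V -> bool) :=
  inX W x /\ forall pq b, xt pq = Some b -> x pq = b.

Definition decided (W : {set V}) (xt : V * V -> option bool) (pq : V * V) :=
  forall x1 x2, inXp W xt x1 -> inXp W xt x2 -> x1 pq = x2 pq.

Definition maximally_specific (W : {set V}) (xt : V * V -> option bool) :=
  partial_fun W xt /\ (exists x, inXp W xt x) /\
  (forall pq, pq \in Pairs W -> (decided W xt pq <-> pq \in dom xt)).

Definition restrP (U : {set V}) (xt : V * V -> option bool) : V * V -> option bool :=
  fun pq => if pq \in Pairs U then xt pq else None.

(* phi_c(x) over P_W; phi_{c|P_U} = phi over P_U with c *)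
Definition phi (R : realType) (W : {set V}) (c : V * V -> R) (x : V * V -> bool) : R :=
  \sum_(pq in Pairs W) c pq * (x pq)%:R.

(* convention x_aa = 1 *)
Definition val1 (x : V * V -> bool) (p q : V) : bool := (p == q) || x (p, q).

Definition delta (U : {set V}) : {set V * V} :=
  [set pq | ((pq.1 \in U) && (pq.2 \notin U)) || ((pq.1 \notin U) && (pq.2 \in U))].

Inductive tau_kind := tau_out | tau_in | tau_bd.

Definition tau (k : tau_kind) (U : {set V}) (y x : V * V -> bool) (pq : V * V) : bool :=
  let p := pq.1 in let q := pq.2 in
  if p == q then false (* outside P_V *)
  else if (p \in U) && (q \in U) then y pq
  else if (p \in U) && (q \notin U) then
    match k with
    | tau_out => false
    | tau_in => [exists r in U, val1 y p r && val1 x r q]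
    | tau_bd => false
    end
  else if (p \notin U) && (q \in U) then
    match k with
    | tau_out => [exists r in U, val1 x p r && val1 y r q]
    | tau_in => false
    | tau_bd => false
    end
  else x pq.

Definition P01 (k : tau_kind) (U : {set V}) (xh : V * V -> option bool) : {set V * V} :=
  match k with
  | tau_out => [set pq | [&& pq.1 \notin U, pq.2 \in U & xh pq != Some true]]
  | tau_in => [set pq | [&& pq.1 \in U, pq.2 \notin U & xh pq != Some true]]
  | tau_bd => set0
  end.

Definition P10 (k : tau_kind) (U : {set V}) (xh : V * V -> option bool) : {set V * V} :=
  match k with
  | tau_out => [set pq | [&& pq.1 \in U, pq.2 \notin U & xh pq != Some false]]
  | tau_in => [set pq | [&& pq.1 \notin U, pq.2 \in U & xh pq != Some false]]
  | tau_bd => [set pq | (pq \in delta U) && (xh pq != Some false)]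
  end.

Definition is_argmax (R : realType) (U : {set V}) (c : V * V -> R)
    (xh' : V * V -> option bool) (ij : V * V) (b : bool) (y : V * V -> bool) : Prop :=
  inXp U xh' y /\ y ij = b /\
  forall x', inXp U xh' x' -> x' ij = b -> phi U c x' <= phi U c y.

End Defs.

Definition posp (R : realType) (a : R) : R := Num.max a 0.
Definition negp (R : realType) (a : R) : R := Num.max (- a) 0.

(* Main.v *)
Require Import Defs.
From HB Require Import structures.
From mathcomp Require Import all_boot all_order all_algebra.
From mathcomp Require Import reals.
Import Order.TTheory GRing.Theory Num.Theory.
Local Open Scope ring_scope.

Lemma negp_ge0 (R : realType) (a : R) : 0 <= negp a.
Proof. by rewrite /negp le_max lexx orbT. Qed.
Lemma posp_ge0 (R : realType) (a : R) : 0 <= posp a.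
Proof. by rewrite /posp le_max lexx orbT. Qed.
Lemma negp_ge (R : realType) (a : R) : - a <= negp a.
Proof. by rewrite /negp le_max lexx. Qed.
Lemma posp_ge (R : realType) (a : R) : a <= posp a.
Proof. by rewrite /posp le_max lexx. Qed.

Ltac fin := repeat (case: ifP => _); do 3! rewrite /= ?add0r ?addr0 ?oppr0 ?mulr0 ?mulr1 ?subr0 ?subrr ?sub0r ?mulrN1 ?mulrN ?mulr1;
  try done; try (by apply: addr_ge0); try (by apply: ler_wpDl); try (by apply: ler_wpDr).

Theorem corollary7p5 (R : realType) (V : finType) (c : V * V -> R)
    (xh : V * V -> option bool) (U : {set V}) (i j : V) (b : bool)
    (y : V * V -> bool) (k : tau_kind) :
  (0 < #|V|)%N ->
  maximally_specific [set: V] xh ->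
  (i, j) \in Pairs U -> (i, j) \notin dom xh ->
  is_argmax U c (restrP U xh) (i, j) b y ->
  forall x : V * V -> bool, inXp [set: V] xh x ->
    \sum_(pq in delta U) c pq * ((x pq)%:R - (tau k U y x pq)%:R)
    <= \sum_(pq in P01 k U xh) negp (c pq) + \sum_(pq in P10 k U xh) posp (c pq).
Proof.
move=> _ _ _ _ _ x [_ hx].
have sub01 : forall pq, pq \in P01 k U xh -> pq \in delta U.
  by case: k => -[p q]; rewrite !inE //= => /and3P[-> -> _]; rewrite ?orbT.
have sub10 : forall pq, pq \in P10 k U xh -> pq \in delta U.
  clear sub01; by case: k => -[p q]; rewrite !inE //= ?andbT; [move=> /and3P[-> -> _]..|move=>/andP[]]; rewrite ?orbT.
have E01 : \sum_(pq in P01 k U xh) negp (c pq) =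
   \sum_(pq in delta U) (if pq \in P01 k U xh then negp (c pq) else 0).
  rewrite big_mkcond [RHS]big_mkcond; apply: eq_bigr => pq _.
  case: (boolP (pq \in delta U)) => // nd.
  by case: ifP => // /sub01; rewrite (negbTE nd).
have E10 : \sum_(pq in P10 k U xh) posp (c pq) =
   \sum_(pq in delta U) (if pq \in P10 k U xh then posp (c pq) else 0).
  rewrite big_mkcond [RHS]big_mkcond; apply: eq_bigr => pq _.
  case: (boolP (pq \in delta U)) => // nd.
  by case: ifP => // /sub10; rewrite (negbTE nd).
rewrite E01 E10 -big_split /=; apply: ler_sum => -[p q] hd; clear E01 E10 sub01 sub10.
have hn := @negp_ge0 R (c (p, q)); have hp := @posp_ge0 R (c (p, q)).
have hn' := @negp_ge R (c (p, q)); have hp' := @posp_ge R (c (p, q)).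
have hxs : forall bb, xh (p, q) = Some bb -> x (p, q) = bb by move=> bb /hx.
rewrite /tau /=.
have xhT : x (p, q) = false -> xh (p, q) != Some true.
  by move=> h; apply/eqP => /hxs; rewrite h.
have xhF : x (p, q) = true -> xh (p, q) != Some false.
  by move=> h; apply/eqP => /hxs; rewrite h.
have bnd0 : forall P Q : bool, 0 <= (if P then negp (c (p, q)) else 0) + (if Q then posp (c (p, q)) else 0).
  by move=> [] []; rewrite ?addr0 ?add0r ?addr_ge0.
have bndP : forall P : bool, c (p, q) <= (if P then negp (c (p, q)) else 0) + posp (c (p, q)).
  by move=> []; rewrite ?add0r // ler_wpDl.
have bndN : forall Q : bool, - c (p, q) <= negp (c (p, q)) + (if Q then posp (c (p, q)) else 0).
  by move=> []; rewrite ?addr0 // ler_wpDr.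
case pU: (p \in U); case qU: (q \in U);
  rewrite ?inE /= ?pU ?qU /= in hd; try by [].
- have -> : (p == q) = false by apply/eqP => E; move: pU; rewrite E qU.
  rewrite ?pU ?qU /=.
  case: k; rewrite /= !inE /= ?pU ?qU /=.
  + case hxv: (x (p, q)); [rewrite ?(xhF hxv) | rewrite ?(xhT hxv)]; fin.
  + case hxv: (x (p, q)).
      have -> : [exists r in U, Defs.val1 y p r && Defs.val1 x r q].
        by apply/existsP; exists p; rewrite pU /Defs.val1 eqxx /= hxv orbT.
      fin.
    rewrite (xhT hxv) /=; case: [exists _ in _, _]; fin.
  + case hxv: (x (p, q)); [rewrite ?(xhF hxv) | rewrite ?(xhT hxv)]; fin.
- have -> : (p == q) = false by apply/eqP => E; move: pU; rewrite E qU.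
  rewrite ?pU ?qU /=.
  case: k; rewrite /= !inE /= ?pU ?qU /=.
  + case hxv: (x (p, q)).
      have -> : [exists r in U, Defs.val1 x p r && Defs.val1 y r q].
        by apply/existsP; exists q; rewrite qU /Defs.val1 eqxx /= hxv orbT.
      fin.
    rewrite (xhT hxv) /=; case: [exists _ in _, _]; fin.
  + case hxv: (x (p, q)); [rewrite ?(xhF hxv) | rewrite ?(xhT hxv)]; fin.
  + case hxv: (x (p, q)); [rewrite ?(xhF hxv) | rewrite ?(xhT hxv)]; fin.
Qed.
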